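(* Let $q$ be a prime power, $2\le n\le m$, and $0\ne\mathcal{C}\subseteq\mathrm{Mat}$ a rank-metric code. Then $d(\mathcal{C})=n+1-\min\{d\mid \rho_{\mathrm c}(\mathcal{C},J)=\dim(\mathcal{C})/m \text{ for all subspaces } J\subseteq\mathbb{F}_q^n\text{ with }\dim(J)=d\}=m+1-\min\{d\mid\rho_{\mathrm r}(\mathcal{C},K)=\dim(\mathcal{C})/n\text{ for all subspaces }K\subseteq\mathbb{F}_q^m\text{ with }\dim(K)=d\}$.
   Context: $\mathrm{Mat}$ is the $\mathbb{F}_q$-space of $n\times m$ matrices over $\mathbb{F}_q$; a rank-metric code is an $\mathbb{F}_q$-linear subspace, with minimum distance $d(\mathcal{C})=\min\{\mathrm{rk}(M)\mid M\in\mathcal{C},M\ne0\}$. For subspaces $J\subseteq\mathbb{F}_q^n$, $K\subseteq\mathbb{F}_q^m$: $\mathcal{C}(J,\mathrm c)=\{M\in\mathcal{C}\mid\mathrm{colsp}(M)\subseteq J\}$, $\mathcal{C}(K,\mathrm r)=\{M\in\mathcal{C}\mid\mathrm{rowsp}(M)\subseteq K\}$, $\rho_{\mathrm c}(\mathcal{C},J)=(\dim\mathcal{C}-\dim\mathcal{C}(J^\perp,\mathrm c))/m$, $\rho_{\mathrm r}(\mathcal{C},K)=(\dim\mathcal{C}-\dim\mathcal{C}(K^\perp,\mathrm r))/n$, with $\perp$ the orthogonal complement for the standard inner product. *)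

(* Defs.v *)
From HB Require Import structures.
From mathcomp Require Import all_boot all_order all_algebra all_field.
Set Implicit Arguments. Unset Strict Implicit. Unset Printing Implicit Defensive.
Import GRing.Theory.
Local Open Scope ring_scope.

(* F plays the role of F_q (any finite field; q = #|F|).
   Subspaces J of F^n are represented by matrices J : 'M[F]_n through their
   row space (mxalgebra); dim J = \rank J.  For M : 'M_(n,m),
   colsp(M) <= J  <->  (M^T <= J)%MS,  rowsp(M) <= K  <->  (M <= K)%MS. *)

Section Defs.
Variables (F : finFieldType) (n m : nat).

Definition perpmx (k : nat) (J : 'M[F]_k) : 'M[F]_k := kermx J^T.

(* minimum rank of a nonzero element of C (default n, irrelevant for C != 0) *)
Definition min_dist (C : {vspace 'M[F]_(n, m)}) : nat :=
  \big[minn/n]_(M : 'M[F]_(n, m) | (M \in C) && (M != 0)) \rank M.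

(* C(J, c) and C(K, r), as the spans of the (already linear) sets *)
Definition subcode_c (C : {vspace 'M[F]_(n, m)}) (J : 'M[F]_n)
  : {vspace 'M[F]_(n, m)} :=
  <<[seq M <- enum 'M[F]_(n, m) | (M \in C) && (M^T <= J)%MS]>>%VS.

Definition subcode_r (C : {vspace 'M[F]_(n, m)}) (K : 'M[F]_m)
  : {vspace 'M[F]_(n, m)} :=
  <<[seq M <- enum 'M[F]_(n, m) | (M \in C) && (M <= K)%MS]>>%VS.

Definition rho_c (C : {vspace 'M[F]_(n, m)}) (J : 'M[F]_n) : rat :=
  ((\dim C)%:R - (\dim (subcode_c C (perpmx J)))%:R) / m%:R.

Definition rho_r (C : {vspace 'M[F]_(n, m)}) (K : 'M[F]_m) : rat :=
  ((\dim C)%:R - (\dim (subcode_r C (perpmx K)))%:R) / n%:R.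

(* min { d | rho_c(C,J) = dim C / m for all J with dim J = d }.
   d = n always qualifies and no subspace has dimension > n, so the min over
   d <= n is the min over all d. *)
Definition dmin_c (C : {vspace 'M[F]_(n, m)}) : nat :=
  \big[minn/n]_(d < n.+1 |
     [forall J : 'M[F]_n, (\rank J == d) ==>
        (rho_c C J == (\dim C)%:R / m%:R)]) (d : nat).

Definition dmin_r (C : {vspace 'M[F]_(n, m)}) : nat :=
  \big[minn/m]_(d < m.+1 |
     [forall K : 'M[F]_m, (\rank K == d) ==>
        (rho_r C K == (\dim C)%:R / n%:R)]) (d : nat).

End Defs.

(* Main.v *)
Require Import Defs.
From HB Require Import structures.
From mathcomp Require Import all_boot all_order all_algebra all_field.
Local Open Scope ring_scope.
Import GRing.Theory Num.Theory.
Set Implicit Arguments. Unset Strict Implicit.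

Lemma bigmin_le_seq (I : eqType) (P : pred I) (G : I -> nat) x j (r : seq I) :
  j \in r -> P j -> (\big[minn/x]_(i <- r | P i) G i <= G j)%N.
Proof.
elim: r => // a r IH; rewrite inE big_cons; case/orP=> [/eqP-> | jr] Pj.
  by rewrite Pj geq_minl.
case: (P a); last exact: IH.
exact: leq_trans (geq_minr _ _) (IH jr Pj).
Qed.

Lemma bigmin_le (I : finType) (P : pred I) (G : I -> nat) x j :
  P j -> (\big[minn/x]_(i | P i) G i <= G j)%N.
Proof. by move=> Pj; apply: bigmin_le_seq => //; rewrite mem_index_enum. Qed.

Lemma bigmin_ge (I : finType) (P : pred I) (G : I -> nat) x t :
  (t <= x)%N -> (forall i, P i -> t <= G i)%N -> (t <= \big[minn/x]_(i | P i) G i)%N.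
Proof.
move=> tx tG; apply: (big_ind (fun v => t <= v)%N) => // a b ta tb.
by rewrite leq_min ta tb.
Qed.

Lemma bigmin_ex (I : finType) (P : pred I) (G : I -> nat) x :
  \big[minn/x]_(i | P i) G i = x \/ exists j, P j /\ \big[minn/x]_(i | P i) G i = G j.
Proof.
apply: (big_ind (fun v => v = x \/ exists j, P j /\ v = G j)); first by left.
  by move=> a b Ha Hb /=; rewrite /minn; case: ifP.
by move=> i Pi; right; exists i.
Qed.

Lemma span_filter_dim0 (F : finFieldType) n m (P : pred 'M[F]_(n, m)) :
  (\dim <<[seq M <- enum 'M[F]_(n, m) | P M]>>%VS == 0)%N =
  [forall M, P M ==> (M == 0)].
Proof.
rewrite dimv_eq0; apply/eqP/forallP => [H M | H].
  apply/implyP => PM; have : M \in <<[seq M <- enum 'M[F]_(n, m) | P M]>>%VS.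
    by apply: memv_span; rewrite mem_filter PM mem_enum.
  by rewrite H memv0.
apply/eqP; rewrite -subv0; apply/span_subvP => M.
rewrite mem_filter => /andP[PM _]; have := H M; rewrite PM /= => /eqP->.
by rewrite mem0v.
Qed.

Lemma rank_perpmx (F : finFieldType) k (J : 'M[F]_k) :
  \rank (perpmx J) = (k - \rank J)%N.
Proof. by rewrite /perpmx mxrank_ker mxrank_tr. Qed.

Lemma exists_perp (F : finFieldType) p k (M : 'M[F]_(p, k)) r :
  (\rank M <= r)%N -> (r <= k)%N ->
  exists J : 'M[F]_k, \rank J = (k - r)%N /\ (M <= perpmx J)%MS.
Proof.
move=> Mr rk; set B := kermx M^T.
have sB : (k - r <= \rank B)%N by rewrite mxrank_ker mxrank_tr; apply: leq_sub2l.
exists ((pid_mx (k - r) : 'M_(k, \rank B)) *m row_base B); split.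
  by rewrite mxrankMfree ?row_base_free // rank_pid_mx // leq_subr.
rewrite /perpmx sub_kermx trmx_mul mulmxA.
have : (row_base B <= kermx M^T)%MS by rewrite eq_row_base.
by rewrite sub_kermx => /eqP H; rewrite -[M]trmxK -trmx_mul H trmx0 mul0mx.
Qed.

From mathcomp Require Import zify.

Lemma min_dist_le (F : finFieldType) n m (C : {vspace 'M[F]_(n, m)}) M :
  M \in C -> M != 0 -> (min_dist C <= \rank M)%N.
Proof. by move=> MC M0; apply: bigmin_le; rewrite MC M0. Qed.

Lemma min_dist_ex (F : finFieldType) n m (C : {vspace 'M[F]_(n, m)}) :
  C != 0%VS -> exists M, [/\ M \in C, M != 0 & \rank M = min_dist C].
Proof.
move=> C0; case: (bigmin_ex (fun M : 'M[F]_(n, m) => (M \in C) && (M != 0))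
   (fun M => \rank M) n).
  move=> H; exists (vpick C); rewrite memv_pick vpick0 C0; split=> //.
  apply/eqP; rewrite eqn_leq min_dist_le ?memv_pick ?vpick0 // andbT.
  by rewrite /min_dist H rank_leq_row.
by case=> M [/andP[MC M0] H]; exists M; split.
Qed.

Lemma key (F : finFieldType) n m p k (C : {vspace 'M[F]_(n, m)})
  (g : 'M[F]_(n, m) -> 'M[F]_(p, k)) (grk : forall M, \rank (g M) = \rank M)
  (C0 : C != 0%VS) d (dk : (d <= k)%N) :
  (forall J : 'M[F]_k, \rank J = d -> forall M, M \in C -> M != 0 ->
     ~~ (g M <= perpmx J)%MS) <-> (k - d < min_dist C)%N.
Proof.
split=> [H | H J rJ M MC M0].
  rewrite ltnNge; apply/negP => le.
  have [M [MC M0 rM]] := min_dist_ex C0.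
  have [J [rJ sJ]] := exists_perp (M := g M) (r := (k - d)%N) 
     ltac:(by rewrite grk rM) (leq_subr _ _).
  by move: (H J ltac:(rewrite rJ; lia) M MC M0); rewrite sJ.
apply/negP => sM; have := mxrankS sM; rewrite grk rank_perpmx rJ => le.
have := min_dist_le MC M0; lia.
Qed.

Lemma dmin_val k t (Q : pred 'I_k.+1) :
  (t <= k)%N -> (forall d : 'I_k.+1, Q d = (t <= d)%N) ->
  \big[minn/k]_(d < k.+1 | Q d) (d : nat) = t.
Proof.
move=> tk HQ; apply/eqP; rewrite eqn_leq; apply/andP; split.
  have tk1 : (t < k.+1)%N by [].
  by apply: (@bigmin_le _ _ _ _ (Ordinal tk1)); rewrite HQ.
by apply: bigmin_ge => // i; rewrite HQ.
Qed.

Lemma rho_eq (a b m : nat) : (0 < m)%N ->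
  (((a%:R - b%:R) / m%:R == a%:R / m%:R :> rat) = (b == 0)%N).
Proof.
move=> m0; rewrite -subr_eq0 -mulrBl mulf_eq0 invr_eq0 pnatr_eq0.
have -> : (m == 0)%N = false by lia.
by rewrite orbF addrAC subrr add0r oppr_eq0 pnatr_eq0.
Qed.

Lemma min_dist_bounds (F : finFieldType) n m (C : {vspace 'M[F]_(n, m)}) :
  C != 0%VS -> (0 < min_dist C)%N /\ (min_dist C <= minn n m)%N.
Proof.
move=> C0; have [M [MC M0 rM]] := min_dist_ex C0.
rewrite -rM lt0n mxrank_eq0 M0 leq_min rank_leq_row rank_leq_col; by [].
Qed.

Theorem corollary5p3 (F : finFieldType) (n m : nat) (C : {vspace 'M[F]_(n, m)}) :
  (2 <= n)%N -> (n <= m)%N -> C != 0%VS ->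
  min_dist C = (n.+1 - dmin_c C)%N /\ min_dist C = (m.+1 - dmin_r C)%N.
Proof.
move=> n2 nm C0; have [d1 d2] := min_dist_bounds C0.
have d3 : (min_dist C <= n)%N by move: d2; rewrite leq_min => /andP[].
have d4 : (min_dist C <= m)%N by move: d2; rewrite leq_min => /andP[].
have m0 : (0 < m)%N by lia.
have n0 : (0 < n)%N by lia.
split.
  rewrite /dmin_c (@dmin_val n (n.+1 - min_dist C)%N); first by lia.
    by lia.
  move=> d; have dn : (d <= n)%N by rewrite -ltnS ltn_ord.
  have K := key (g := @trmx F n m) (@mxrank_tr F n m) C0 dn.
  apply/idP/idP => [/forallP H | le].
    suff : (n - d < min_dist C)%N by lia.
    apply/K => J rJ M MC M0; have := H J.
    rewrite rJ eqxx /= /rho_c rho_eq // span_filter_dim0 => /forallP/(_ M).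
    rewrite MC /= => /implyP Hi; apply/negP => s.
    by move: M0; rewrite (eqP (Hi s)) eqxx.
  have K2 := proj2 K ltac:(lia).
  apply/forallP => J; apply/implyP => /eqP rJ.
  rewrite /rho_c rho_eq // span_filter_dim0; apply/forallP => M.
  apply/implyP => /andP[MC sM]; apply/negPn/negP => M0.
  by have := K2 J rJ M MC M0; rewrite sM.
rewrite /dmin_r (@dmin_val m (m.+1 - min_dist C)%N); first by lia.
  by lia.
move=> d; have dn : (d <= m)%N by rewrite -ltnS ltn_ord.
have K := key (g := id) (fun M : 'M[F]_(n, m) => erefl (\rank M)) C0 dn.
apply/idP/idP => [/forallP H | le].
  suff : (m - d < min_dist C)%N by lia.
  apply/K => J rJ M MC M0; have := H J.
  rewrite rJ eqxx /= /rho_r rho_eq // span_filter_dim0 => /forallP/(_ M).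
  rewrite MC /= => /implyP Hi; apply/negP => s.
  by move: M0; rewrite (eqP (Hi s)) eqxx.
have K2 := proj2 K ltac:(lia).
apply/forallP => J; apply/implyP => /eqP rJ.
rewrite /rho_r rho_eq // span_filter_dim0; apply/forallP => M.
apply/implyP => /andP[MC sM]; apply/negPn/negP => M0.
by have := K2 J rJ M MC M0; rewrite sM.
Qed.
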